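(* Let $A_1,A_2,B_1,B_2$ be four yes/no observables (taking values in $\{0,1\}$), and suppose that for each pair $(i,j)\in\{1,2\}^2$ we are given a probability measure $\mu_{ij}$ on the Boolean algebra freely generated by $A_i$ and $B_j$, such that these measures are consistent on common observables: the probability of $A_i=1$ does not depend on $j$, and the probability of $B_j=1$ does not depend on $i$. Write $\langle A_i\rangle$, $\langle B_j\rangle$, $\langle A_iB_j\rangle$ for the corresponding expectations. Then the following are equivalent: (1) there is a classical probability space $(X,\Sigma,\mu)$ and $\{0,1\}$-valued measurable functions $A_1,A_2,B_1,B_2$ on it whose expectations $\langle A_i\rangle,\langle B_j\rangle,\langle A_iB_j\rangle$ (for all $i,j\in\{1,2\}$) coincide with the given ones; (2) there exists a real number $c$ such that for each $k\in\{1,2\}$ there is a classical probability model for the three $\{0,1\}$-valued variables $A_1,A_2,B_k$ reproducing the given values $\langle A_1\rangle,\langle A_2\rangle,\langle B_k\rangle,\langle A_1B_k\rangle,\langle A_2B_k\rangle$ and satisfying $\langle A_1A_2\rangle=c$.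
   Context: A classical probability model (classical representation) for a set of yes/no observables is a probability space $(X,\Sigma,\mu)$ in which each observable is represented by the indicator function of a measurable set; expectations and correlations such as $\langle A_1A_2\rangle$ denote $\mu$-expectations of the products of these indicator functions. In the Bell–Clauser–Horne setting, $A_i$ is compatible (jointly measurable) with $B_j$ for all $i,j$, whereas $A_1,A_2$ are mutually incompatible and $B_1,B_2$ are mutually incompatible; so only $\langle A_i\rangle,\langle B_j\rangle,\langle A_iB_j\rangle$ are given data, while $\langle A_1A_2\rangle$ is an unmeasurable correlation. *)

(* Defs.v *)
From HB Require Import structures.
From mathcomp Require Import all_boot all_order all_algebra.
From mathcomp Require Import all_classical all_reals all_analysis.
Set Implicit Arguments. Unset Strict Implicit. Unset Printing Implicit Defensive.
Import Order.TTheory GRing.Theory Num.Theory.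
Local Open Scope ring_scope.
Local Open Scope classical_set_scope.

(* A probability measure on the Boolean algebra freely generated by two
   yes/no observables X, Y is determined by its values on the four atoms
   [X = a /\ Y = b], (a, b) : bool * bool. *)
Definition bool2_prob (R : realType) (p : bool * bool -> R) : Prop :=
  (forall x, 0 <= p x) /\ \sum_(x : bool * bool) p x = 1.

Definition marg1 (R : realType) (p : bool * bool -> R) : R := p (true, true) + p (true, false).
Definition marg2 (R : realType) (p : bool * bool -> R) : R := p (true, true) + p (false, true).
Definition prodE (R : realType) (p : bool * bool -> R) : R := p (true, true).

(* Bell--Clauser--Horne data: mu i j is the joint distribution of (A_i, B_j). *)
Definition BCH_data (R : realType) (mu : 'I_2 -> 'I_2 -> bool * bool -> R) : Prop :=
  (forall i j, bool2_prob (mu i j)) /\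
  (forall i j j', marg1 (mu i j) = marg1 (mu i j')) /\
  (forall i i' j, marg2 (mu i j) = marg2 (mu i' j)).

(* <A_i> (independent of j by consistency), <B_j>, <A_i B_j> *)
Definition expA (R : realType) (mu : 'I_2 -> 'I_2 -> bool * bool -> R) (i : 'I_2) : R :=
  marg1 (mu i ord0).
Definition expB (R : realType) (mu : 'I_2 -> 'I_2 -> bool * bool -> R) (j : 'I_2) : R :=
  marg2 (mu ord0 j).
Definition expAB (R : realType) (mu : 'I_2 -> 'I_2 -> bool * bool -> R) (i j : 'I_2) : R :=
  prodE (mu i j).

(* The expectation of a product of indicators 1_U 1_V is P (U `&` V). *)
Definition classical_BCH (R : realType) (mu : 'I_2 -> 'I_2 -> bool * bool -> R) : Prop :=
  exists (d : measure_display) (T : measurableType d) (P : probability T R)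
         (A B : 'I_2 -> set T),
    (forall i, measurable (A i)) /\ (forall j, measurable (B j)) /\
    (forall i, P (A i) = (expA mu i)%:E) /\
    (forall j, P (B j) = (expB mu j)%:E) /\
    (forall i j, P (A i `&` B j) = (expAB mu i j)%:E).

Definition classical_triple (R : realType) (mu : 'I_2 -> 'I_2 -> bool * bool -> R)
    (k : 'I_2) (c : R) : Prop :=
  exists (d : measure_display) (T : measurableType d) (P : probability T R)
         (A : 'I_2 -> set T) (Bk : set T),
    (forall i, measurable (A i)) /\ measurable Bk /\
    (forall i, P (A i) = (expA mu i)%:E) /\
    P Bk = (expB mu k)%:E /\
    (forall i, P (A i `&` Bk) = (expAB mu i k)%:E) /\
    P (A ord0 `&` A (lift ord0 ord0)) = c%:E.

(* Main.v *)
Require Import Defs.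
From HB Require Import structures.
From mathcomp Require Import all_boot all_order all_algebra.
From mathcomp Require Import all_classical all_reals all_analysis.
From mathcomp Require Import ring lra.
Set Implicit Arguments. Unset Strict Implicit. Unset Printing Implicit Defensive.
Import Order.TTheory GRing.Theory Num.Theory.
Local Open Scope ring_scope.
Local Open Scope classical_set_scope.
Definition pr d (T : measurableType d) (R : realType) (P : probability T R) (U : set T) : R :=
  fine (P U).

Lemma prE d (T : measurableType d) (R : realType) (P : probability T R) U :
  measurable U -> (pr P U)%:E = P U.
Proof. by move=> mU; rewrite /pr fineK // fin_num_measure. Qed.

Lemma pr_ge0 d (T : measurableType d) (R : realType) (P : probability T R) U :
  measurable U -> 0 <= pr P U.
Proof. by move=> mU; rewrite -lee_fin prE. Qed.

Lemma pr_le1 d (T : measurableType d) (R : realType) (P : probability T R) U :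
  measurable U -> pr P U <= 1.
Proof. by move=> mU; rewrite -lee_fin prE // probability_le1. Qed.

Lemma pr_mono d (T : measurableType d) (R : realType) (P : probability T R) U V :
  measurable U -> measurable V -> U `<=` V -> pr P U <= pr P V.
Proof. by move=> mU mV UV; rewrite -lee_fin !prE // le_measure // inE. Qed.

Lemma pr_union d (T : measurableType d) (R : realType) (P : probability T R) U V :
  measurable U -> measurable V -> pr P (U `|` V) = pr P U + pr P V - pr P (U `&` V).
Proof.
move=> mU mV; apply: EFin_inj.
rewrite EFinB EFinD (prE P mU) (prE P mV) (prE P (measurableI _ _ mU mV)).
rewrite (prE P (measurableU _ _ mU mV)) measureUfinl //.
by rewrite ltey_eq fin_num_measure.
Qed.

Definition qf (R : realType) (x0 x1 y z0 z1 c t : R) (a b e : bool) : R :=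
  match a, b, e with
  | true, true, true => t
  | true, true, false => c - t
  | true, false, true => z0 - t
  | true, false, false => x0 - c - z0 + t
  | false, true, true => z1 - t
  | false, true, false => x1 - c - z1 + t
  | false, false, true => y - z0 - z1 + t
  | false, false, false => 1 - x0 - x1 - y + c + z0 + z1 - t
  end.

Lemma triple_nonneg d (T : measurableType d) (R : realType) (P : probability T R)
  (A0 A1 B : set T) : measurable A0 -> measurable A1 -> measurable B ->
  forall a b e, 0 <= qf (pr P A0) (pr P A1) (pr P B) (pr P (A0 `&` B)) (pr P (A1 `&` B))
     (pr P (A0 `&` A1)) (pr P (A0 `&` A1 `&` B)) a b e.
Proof.
move=> m0 m1 mB.
have m01 := measurableI _ _ m0 m1.
have m0B := measurableI _ _ m0 mB.
have m1B := measurableI _ _ m1 mB.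
have m01B := measurableI _ _ m01 mB.
have h1 := pr_ge0 P m01B.
have h2 : pr P (A0 `&` A1 `&` B) <= pr P (A0 `&` A1).
  by apply: pr_mono => // x [].
have h3 : pr P (A0 `&` A1 `&` B) <= pr P (A0 `&` B).
  by apply: pr_mono => // x [[]].
have h4 : pr P (A0 `&` A1 `&` B) <= pr P (A1 `&` B).
  by apply: pr_mono => // x [[]].
have h5 : pr P ((A0 `&` A1) `|` (A0 `&` B)) <= pr P A0.
  by apply: pr_mono => //; [exact: measurableU | move=> x [[]|[]]].
rewrite pr_union // in h5.
have e5 : (A0 `&` A1) `&` (A0 `&` B) = A0 `&` A1 `&` B.
  by apply/seteqP; split => x /=; tauto.
rewrite e5 in h5.
have h6 : pr P ((A0 `&` A1) `|` (A1 `&` B)) <= pr P A1.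
  by apply: pr_mono => //; [exact: measurableU | move=> x [[]|[]]].
rewrite pr_union // in h6.
have e6 : (A0 `&` A1) `&` (A1 `&` B) = A0 `&` A1 `&` B.
  by apply/seteqP; split => x /=; tauto.
rewrite e6 in h6.
have h7 : pr P ((A0 `&` B) `|` (A1 `&` B)) <= pr P B.
  by apply: pr_mono => //; [exact: measurableU | move=> x [[]|[]]].
have u7 := pr_union P m0B m1B.
have e7 : (A0 `&` B) `&` (A1 `&` B) = A0 `&` A1 `&` B.
  by apply/seteqP; split => x /=; tauto.
rewrite e7 in u7.
have m01u := measurableU _ _ m0 m1.
have h8 := pr_le1 P (measurableU _ _ m01u mB).
rewrite pr_union // in h8; last first.
rewrite (pr_union P m0 m1) in h8.
have e8 : (A0 `|` A1) `&` B = (A0 `&` B) `|` (A1 `&` B).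
  by apply/seteqP; split => x /=; tauto.
rewrite e8 in h8.
by case; case; case => /=; lra.
Qed.
Lemma memb (f : nat -> bool) k : (k \in [set k | f k]) = f k.
Proof. by case E: (f k); [apply/mem_set | apply/memNset => /=; rewrite E]. Qed.

Lemma setIb (f g : nat -> bool) : [set k | f k] `&` [set k | g k] = [set k | f k && g k].
Proof. by apply/seteqP; split => x /=; [move=> [-> ->] | move/andP]. Qed.

Lemma mnorm1 d (T : measurableType d) (R : realType) (mu : {measure set T -> \bar R})
  (P : probability T R) X : mu setT = 1%E -> mnormalize mu P X = mu X.
Proof. by move=> h; rewrite /mnormalize h /= onee_eq0 /= invr1 mule1. Qed.

Lemma glued_prob (R : realType) (w : nat -> R) (hw : forall k, 0 <= w k)
  (hs : \sum_(k < 16) w k = 1) :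
  exists P : probability nat R, forall X, P X = (\sum_(k < 16) w k * ((k : nat) \in X)%:R)%:E.
Proof.
pose M := msum (fun k => mscale (NngNum (hw k)) (@dirac _ nat k R)) 16.
have ME X : M X = (\sum_(k < 16) w k * ((k : nat) \in X)%:R)%:E.
  rewrite /M /msum /= -sumEFin; apply: eq_bigr => k _.
  by rewrite /mscale /= diracE EFinM.
exists (mnormalize M (@dirac _ nat 0%N R)) => X.
have M1 : M [set: nat] = 1%E.
  rewrite ME (eq_bigr (fun k : 'I_16 => w k)) ?hs // => k _; by rewrite in_setT mulr1.
by rewrite -ME; apply: mnorm1.
Qed.

Definition gp (R : realType) (q0 q1 : bool -> bool -> bool -> R) (a b e0 e1 : bool) : R :=
  q0 a b e0 * q1 a b e1 / (q0 a b true + q0 a b false).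

Lemma gp_ge0 (R : realType) (q0 q1 : bool -> bool -> bool -> R) :
  (forall a b e, 0 <= q0 a b e) -> (forall a b e, 0 <= q1 a b e) ->
  forall a b e0 e1, 0 <= gp q0 q1 a b e0 e1.
Proof.
move=> h0 h1 a b e0 e1; rewrite /gp.
by apply: divr_ge0; [apply: mulr_ge0 | apply: addr_ge0].
Qed.

Lemma gp_marg (R : realType) (q0 q1 : bool -> bool -> bool -> R) :
  (forall a b e, 0 <= q0 a b e) -> (forall a b e, 0 <= q1 a b e) ->
  (forall a b, q1 a b true + q1 a b false = q0 a b true + q0 a b false) ->
  (forall a b e0, gp q0 q1 a b e0 true + gp q0 q1 a b e0 false = q0 a b e0) /\
  (forall a b e1, gp q0 q1 a b true e1 + gp q0 q1 a b false e1 = q1 a b e1).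
Proof.
move=> h0 h1 hr.
have E : forall x y1 y2 r : R, x*y1/r + x*y2/r = x*(y1+y2)/r.
  by move=> *; rewrite mulrDr mulrDl.
have E' : forall x1 x2 y r : R, x1*y/r + x2*y/r = y*(x1+x2)/r.
  by move=> *; ring.
split.
- move=> a b e0; rewrite /gp E hr.
  have [r0|r0] := eqVneq (q0 a b true + q0 a b false) 0.
    have : q0 a b e0 = 0.
      have := h0 a b true; have := h0 a b false.
      by case: e0; lra.
    by move=> ->; rewrite !mul0r.
  by rewrite mulfK.
- move=> a b e1; rewrite /gp E'.
  have [r0|r0] := eqVneq (q0 a b true + q0 a b false) 0.
    have : q1 a b e1 = 0.
      have := h1 a b true; have := h1 a b false; have := hr a b.
      by case: e1; lra.
    by move=> ->; rewrite !mul0r.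
  by rewrite mulfK.
Qed.

Lemma I2_cases (i : 'I_2) : i = ord0 \/ i = lift ord0 ord0.
Proof. by case: i => [[|[|//]]] pf; [left|right]; apply/val_inj. Qed.

Lemma triple_ex (R : realType) (mu : 'I_2 -> 'I_2 -> bool * bool -> R) k c :
  classical_triple mu k c -> exists t, forall a b e,
  0 <= qf (expA mu ord0) (expA mu (lift ord0 ord0)) (expB mu k) (expAB mu ord0 k)
          (expAB mu (lift ord0 ord0) k) c t a b e.
Proof.
move=> [d [T [P [A [Bk [mA [mB [hA [hB [hAB hc]]]]]]]]]].
exists (pr P (A ord0 `&` A (lift ord0 ord0) `&` Bk)) => a b e.
have := triple_nonneg P (mA ord0) (mA (lift ord0 ord0)) mB a b e.
by rewrite /pr !hA hB !hAB hc.
Qed.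

Theorem mainTheorem1 (R : realType) (mu : 'I_2 -> 'I_2 -> bool * bool -> R) :
  BCH_data mu ->
  (classical_BCH mu <-> exists c : R, forall k : 'I_2, classical_triple mu k c).
Proof.
move=> _; split.
  move=> [d [T [P [A [B [mA [mB [hA [hB hAB]]]]]]]]].
  exists (pr P (A ord0 `&` A (lift ord0 ord0))) => k.
  exists d, T, P, A, (B k); do 5 (split => //).
  by rewrite prE //; apply: measurableI.
move=> [c H].
have [t0 h0] := triple_ex (H ord0).
have [t1 h1] := triple_ex (H (lift ord0 ord0)).
set q0 := qf _ _ _ _ _ _ _ in h0.
set q1 := qf _ _ _ _ _ _ _ in h1.
have hr : forall a b, q1 a b true + q1 a b false = q0 a b true + q0 a b false.
  by rewrite /q0 /q1; case; case => /=; lra.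
have [m0 m1] := gp_marg h0 h1 hr.
pose w (k : nat) := gp q0 q1 (odd k./2./2./2) (odd k./2./2) (odd k./2) (odd k).
have hw : forall k, 0 <= w k by move=> k; apply: gp_ge0.
have M0 := (m0 true true true, m0 true true false, m0 true false true, m0 true false false,
            m0 false true true, m0 false true false, m0 false false true, m0 false false false).
have M1 := (m1 true true true, m1 true true false, m1 true false true, m1 true false false,
            m1 false true true, m1 false true false, m1 false false true, m1 false false false).
move: M0 M1 => [[[[[[[M00 M01] M02] M03] M04] M05] M06] M07] [[[[[[[M10 M11] M12] M13] M14] M15] M16] M17].
have hs : \sum_(k < 16) w k = 1.
  rewrite !big_ord_recr big_ord0 /= /w /=.
  move: M00 M01 M02 M03 M04 M05 M06 M07; rewrite /q0 /=; lra.
have [P hP] := glued_prob hw hs.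
exists default_measure_display, nat, P.
exists (fun i : 'I_2 => [set k : nat | if val i == 0%N then odd k./2./2./2 else odd k./2./2]).
exists (fun j : 'I_2 => [set k : nat | if val j == 0%N then odd k./2 else odd k]).
split; first by [].
split; first by [].
have HS : forall f : nat -> bool, P [set k | f k] = (\sum_(k < 16) w k * (f k)%:R)%:E.
  by move=> f; rewrite hP; congr (_%:E); apply: eq_bigr => k _; rewrite memb.
split.
  move=> i; case: (I2_cases i) => ->; rewrite HS; congr (_%:E);
  rewrite !big_ord_recr big_ord0 /= /w /=;
  move: M00 M01 M02 M03 M04 M05 M06 M07; rewrite /q0 /expA /=; lra.
split.
  move=> j; case: (I2_cases j) => ->; rewrite HS; congr (_%:E);
  rewrite !big_ord_recr big_ord0 /= /w /=.
    move: M00 M01 M02 M03 M04 M05 M06 M07; rewrite /q0 /=; lra.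
  move: M10 M11 M12 M13 M14 M15 M16 M17; rewrite /q1 /=; lra.
move=> i j; rewrite setIb HS; congr (_%:E).
case: (I2_cases i) => ->; case: (I2_cases j) => ->;
  rewrite !big_ord_recr big_ord0 /= /w /=.
- move: M00 M01 M02 M03 M04 M05 M06 M07; rewrite /q0 /=; lra.
- move: M10 M11 M12 M13 M14 M15 M16 M17; rewrite /q1 /=; lra.
- move: M00 M01 M02 M03 M04 M05 M06 M07; rewrite /q0 /=; lra.
- move: M10 M11 M12 M13 M14 M15 M16 M17; rewrite /q1 /=; lra.
Qed.
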